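(* Let $\mathcal{G}$ be a Fischer space of symplectic type and let $\ell=\{a,b,c\}$ be a line. Suppose $\ell$ lies in two different complete quadrilaterals $\pi$ and $\pi'$, where $\pi$ has points $a,b,c,x,y,z$ and lines $\{a,b,c\},\{a,y,z\},\{b,x,z\},\{c,x,y\}$, and $\pi'$ has points $a,b,c,p,q,r$ and lines $\{a,b,c\},\{a,q,r\},\{b,p,r\},\{c,p,q\}$. Then exactly one of the following two cases occurs: (a) $p\sim x$, $q\sim y$, $r\sim z$, and $p\not\sim y$, $p\not\sim z$, $q\not\sim x$, $q\not\sim z$, $r\not\sim x$, $r\not\sim y$. In this case $w:=p\wedge x=q\wedge y=r\wedge z$, and $w$ is not collinear with any of $a,b,c$. (b) $p\not\sim x$, $q\not\sim y$, $r\not\sim z$, and $p\sim y$, $p\sim z$, $q\sim x$, $q\sim z$, $r\sim x$, $r\sim y$. In this case $d:=r\wedge y=q\wedge z$, $e:=r\wedge x=p\wedge z$, $f:=q\wedge x=p\wedge y$; the triples $\{a,e,f\},\{b,d,f\},\{c,d,e\}$ are lines, and the points $a,b,c,d,e,f$ form another complete quadrilateral $\pi''$ containing $\ell$.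
   Context: A 3-transposition group is a pair $(G,D)$ where $D$ is a conjugacy class of involutions generating $G$ with $de$ of order at most $3$ for all $d,e\in D$. Its Fischer space has point set $D$ and as lines the $3$-subsets consisting of the three involutions of a subgroup isomorphic to $\mathrm{Sym}(3)$. Distinct points on a common line are collinear ($p\sim q$), and $p\wedge q$ is the third point of that line. A subspace is a nonempty subset closed under $\wedge$. The subspace generated by two distinct intersecting lines is either a complete quadrilateral (6 points, 4 lines, any two lines meeting in one point, each point on two lines) or an affine plane of order $3$; the Fischer space is of symplectic type if it is always a complete quadrilateral. A complete quadrilateral in $\mathcal{G}$ means a subspace isomorphic to it. *)

(* Defs.v *)
From mathcomp Require Import all_boot all_fingroup.
Set Implicit Arguments. Unset Strict Implicit. Unset Printing Implicit Defensive.

(* An abstract (possibly infinite) group on a carrier type T. *)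
Record group_on (T : Type) := GroupOn {
  gmul : T -> T -> T;
  ginv : T -> T;
  gone : T;
  gmulA : forall x y z, gmul x (gmul y z) = gmul (gmul x y) z;
  gmul1 : forall x, gmul gone x = x;
  gmulV : forall x, gmul (ginv x) x = gone
}.

Section Fischer.
Variables (T : Type) (G : group_on T) (D : T -> Prop).

Fixpoint gpow (x : T) (n : nat) : T :=
  match n with 0 => gone G | n'.+1 => gmul G x (gpow x n') end.

Definition involution (t : T) : Prop := t <> gone G /\ gmul G t t = gone G.

(* (G, D) is a 3-transposition group: D is a conjugacy class of involutions
   generating G (G = the whole carrier T), and de has order at most 3. *)
Definition three_transposition_group : Prop :=
  [/\ (exists d0, forall t, D t <-> exists g, t = gmul G (ginv G g) (gmul G d0 g)),
      (forall t, D t -> involution t),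
      (forall S : T -> Prop, S (gone G) ->
          (forall x y, S x -> S y -> S (gmul G x y)) ->
          (forall x, S x -> S (ginv G x)) ->
          (forall x, D x -> S x) -> forall t, S t) &
      (forall d e, D d -> D e ->
          exists n, [/\ 1 <= n, n <= 3 & gpow (gmul G d e) n = gone G])].

Definition S3_embedding (f : {perm 'I_3} -> T) : Prop :=
  injective f /\ forall s u : {perm 'I_3}, f (s * u)%g = gmul G (f s) (f u).

Definition perm_involution (s : {perm 'I_3}) : bool := (s != 1%g) && (s * s == 1)%g.

(* {a,b,c} is a line of the Fischer space: a 3-subset of D consisting of the
   three involutions of a subgroup isomorphic to Sym(3). *)
Definition fline (a b c : T) : Prop :=
  [/\ D a, D b, D c &
   exists f, S3_embedding f /\
     forall t, (t = a \/ t = b \/ t = c) <-> exists2 s, perm_involution s & f s = t].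

Definition coll (p q : T) : Prop := p <> q /\ exists w, fline p q w.

Definition subspace (S : T -> Prop) : Prop :=
  [/\ exists t, S t, (forall t, S t -> D t) &
      forall u v w, S u -> S v -> fline u v w -> S w].

Definition triple_eq (u v w a b c : T) : Prop :=
  forall t, (t = u \/ t = v \/ t = w) <-> (t = a \/ t = b \/ t = c).

Definition six (a b c x y z : T) : T -> Prop :=
  fun t => t = a \/ t = b \/ t = c \/ t = x \/ t = y \/ t = z.

Definition cquad (a b c x y z : T) : Prop :=
  [/\ (a <> b /\ a <> c /\ a <> x /\ a <> y /\ a <> z /\ b <> c /\ b <> x /\
       b <> y /\ b <> z /\ c <> x /\ c <> y /\ c <> z /\ x <> y /\ x <> z /\ y <> z),
      fline a b c /\ fline a y z /\ fline b x z /\ fline c x y,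
      subspace (six a b c x y z) &
      forall u v w, six a b c x y z u -> six a b c x y z v -> six a b c x y z w ->
        fline u v w ->
        triple_eq u v w a b c \/ triple_eq u v w a y z \/
        triple_eq u v w b x z \/ triple_eq u v w c x y].

Definition is_cquad (S : T -> Prop) : Prop :=
  exists a b c x y z, cquad a b c x y z /\ forall t, S t <-> six a b c x y z t.

Definition generated (A : T -> Prop) : T -> Prop :=
  fun t => forall S, subspace S -> (forall u, A u -> S u) -> S t.

Definition symplectic : Prop :=
  forall a b c d e, fline a b c -> fline a d e -> ~ triple_eq a b c a d e ->
    is_cquad (generated (fun t => t = a \/ t = b \/ t = c \/ t = d \/ t = e)).

End Fischer.

(* Main.v *)
Require Import Defs.
From mathcomp Require Import all_boot all_fingroup.
From Stdlib Require Import Classical.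
Set Implicit Arguments. Unset Strict Implicit.

Definition o0 : 'I_3 := @Ordinal 3 0 isT.
Definition o1 : 'I_3 := @Ordinal 3 1 isT.
Definition o2 : 'I_3 := @Ordinal 3 2 isT.
Definition t01 := tperm o0 o1.
Definition t02 := tperm o0 o2.
Definition t12 := tperm o1 o2.

Lemma invol_tp (i j : 'I_3) : i != j -> perm_involution (tperm i j).
Proof.
move=> ij; rewrite /perm_involution tperm2 eqxx andbT.
apply/eqP => H; move: (congr1 (fun s : {perm 'I_3} => s i) H).
rewrite tpermL perm1 => E; by rewrite E eqxx in ij.
Qed.

Lemma t01_02 : t01 <> t02.
Proof. move=> H; move: (congr1 (fun s : {perm 'I_3} => s o0) H). by rewrite /t01 /t02 !tpermL. Qed.
Lemma t01_12 : t01 <> t12.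
Proof. move=> H; move: (congr1 (fun s : {perm 'I_3} => s o0) H). by rewrite /t01 /t12 tpermL tpermD. Qed.
Lemma t02_12 : t02 <> t12.
Proof. move=> H; move: (congr1 (fun s : {perm 'I_3} => s o0) H). by rewrite /t02 /t12 tpermL tpermD. Qed.

Lemma fline_neq {T} {G : group_on T} {D} a b c : fline G D a b c -> a <> b.
Proof.
case=> _ _ _ [f [[finj _] Hs]] Eab; subst b.
have h1 : f t01 = a \/ f t01 = a \/ f t01 = c by apply/Hs; exists t01 => //; apply: invol_tp.
have h2 : f t02 = a \/ f t02 = a \/ f t02 = c by apply/Hs; exists t02 => //; apply: invol_tp.
have h3 : f t12 = a \/ f t12 = a \/ f t12 = c by apply/Hs; exists t12 => //; apply: invol_tp.
have e1 := t01_02; have e2 := t01_12; have e3 := t02_12.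
have i1 : f t01 <> f t02 by move/finj.
have i2 : f t01 <> f t12 by move/finj.
have i3 : f t02 <> f t12 by move/finj.
intuition congruence.
Qed.

Section Dummy. End Dummy.

Lemma L_bac {T} {G : group_on T} {D} a b c : fline G D a b c -> fline G D b a c.
Proof. case=> Da Db Dc [f [Hf H]]; split=> //; exists f; split=> // t; rewrite -H; tauto. Qed.
Lemma L_acb {T} {G : group_on T} {D} a b c : fline G D a b c -> fline G D a c b.
Proof. case=> Da Db Dc [f [Hf H]]; split=> //; exists f; split=> // t; rewrite -H; tauto. Qed.
Lemma L_cba {T} {G : group_on T} {D} a b c : fline G D a b c -> fline G D c b a.
Proof. case=> Da Db Dc [f [Hf H]]; split=> //; exists f; split=> // t; rewrite -H; tauto. Qed.

Ltac lperm := first [eassumption | eapply L_bac; eassumption | eapply L_acb; eassumption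
  | eapply L_cba; eassumption | eapply L_bac; eapply L_acb; eassumption
  | eapply L_acb; eapply L_bac; eassumption].

Lemma fline_neqs {T} {G : group_on T} {D} a b c : fline G D a b c -> a <> b /\ a <> c /\ b <> c.
Proof.
move=> H; split; first exact: fline_neq H.
split; first exact: (fline_neq (L_acb H)).
exact: (fline_neq (L_acb (L_bac H))).
Qed.

Lemma line_coll {T} {G : group_on T} {D} u v w : fline G D u v w -> coll G D u v.
Proof. move=> H; split; [exact: fline_neq H | by exists w]. Qed.

Lemma coll_sym {T} {G : group_on T} {D} u v : coll G D u v -> coll G D v u.
Proof. case=> n [w H]; split; [by auto | exists w; exact: L_bac]. Qed.

Lemma subspace_ext {T} {G : group_on T} {D} (S S' : T -> Prop) :
  (forall t, S t <-> S' t) -> subspace G D S -> subspace G D S'.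
Proof.
move=> E [[t0 H0] HD Hc]; split.
- by exists t0; apply/E.
- by move=> t /E; apply: HD.
- move=> u v w /E Hu /E Hv Hl; apply/E; exact: Hc Hl.
Qed.

Lemma tri_dest {T} (u v w a b c : T) : triple_eq u v w a b c ->
  (u = a \/ u = b \/ u = c) /\ (v = a \/ v = b \/ v = c) /\ (w = a \/ w = b \/ w = c).
Proof. move=> H; split; [apply H; tauto | split; apply H; tauto]. Qed.

Lemma te_bac {T} (u v w a b c : T) : triple_eq u v w a b c -> triple_eq u v w b a c.
Proof. move=> H t; move: (H t); clear; tauto. Qed.
Lemma te_acb {T} (u v w a b c : T) : triple_eq u v w a b c -> triple_eq u v w a c b.
Proof. move=> H t; move: (H t); clear; tauto. Qed.
Lemma te_cba {T} (u v w a b c : T) : triple_eq u v w a b c -> triple_eq u v w c b a.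
Proof. move=> H t; move: (H t); clear; tauto. Qed.
Ltac tri_go H := first [exact H | exact (te_bac H) | exact (te_acb H) | exact (te_cba H)
  | exact (te_acb (te_bac H)) | exact (te_bac (te_acb H))].
Ltac tri_solve H := first [ left; tri_go H | right; left; tri_go H
  | right; right; left; tri_go H | right; right; right; tri_go H ].

Ltac cq_sym := 
  let Hd := fresh "Hd" in let l1 := fresh "l1" in let l2 := fresh "l2" in
  let l3 := fresh "l3" in let l4 := fresh "l4" in
  let Hsub := fresh "Hsub" in let Hcl := fresh "Hcl" in
  case=> Hd [l1 [l2 [l3 l4]]] Hsub Hcl; split;
  [ decompose [and] Hd; repeat split; congruence
  | split; [|split; [|split]]; lperm
  | apply: subspace_ext Hsub; clear; intro; unfold six; tauto
  | let u := fresh "u" in let v := fresh "v" in let w := fresh "w" in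
    let H := fresh "H" in
    move=> u v w Hu Hv Hw Hl;
    have H := Hcl u v w ltac:(move: Hu; clear; rewrite /six; tauto)
       ltac:(move: Hv; clear; rewrite /six; tauto) ltac:(move: Hw; clear; rewrite /six; tauto) Hl;
    destruct H as [H|[H|[H|H]]]; tri_solve H ].

Lemma cq_bc {T} {G : group_on T} {D} a b c x y z :
  cquad G D a b c x y z -> cquad G D a c b x z y.
Proof. cq_sym. Qed.
Lemma cq_ab {T} {G : group_on T} {D} a b c x y z :
  cquad G D a b c x y z -> cquad G D b a c y x z.
Proof. cq_sym. Qed.
Lemma cq_12 {T} {G : group_on T} {D} a b c x y z :
  cquad G D a b c x y z -> cquad G D a z y x c b.
Proof. cq_sym. Qed.
Lemma cq_13 {T} {G : group_on T} {D} a b c x y z :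
  cquad G D a b c x y z -> cquad G D z b x c y a.
Proof. cq_sym. Qed.
Lemma cq_14 {T} {G : group_on T} {D} a b c x y z :
  cquad G D a b c x y z -> cquad G D y x c b a z.
Proof. cq_sym. Qed.
Lemma cq_cba {T} {G : group_on T} {D} a b c x y z :
  cquad G D a b c x y z -> cquad G D c b a z y x.
Proof. cq_sym. Qed.

Ltac six_in := rewrite /six; tauto.

Lemma cq_nc {T} {G : group_on T} {D} a b c x y z :
  cquad G D a b c x y z -> ~ coll G D a x.
Proof.
case=> Hd _ [_ _ Hc3] Hcl [nax [w Hl]].
have Ha : six a b c x y z a by six_in.
have Hx : six a b c x y z x by six_in.
have Hw := Hc3 a x w Ha Hx Hl.
have H := Hcl a x w Ha Hx Hw Hl.
clear Ha Hx Hw Hcl Hc3.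
decompose [and] Hd.
destruct H as [H|[H|[H|H]]]; have [h1 [h2 _]] := tri_dest H;
  destruct h1 as [h1|[h1|h1]]; destruct h2 as [h2|[h2|h2]]; congruence.
Qed.

Lemma cq_nc2 {T} {G : group_on T} {D} a b c x y z :
  cquad G D a b c x y z -> ~ coll G D b y.
Proof. move=> Q; exact: (cq_nc (cq_ab Q)). Qed.
Lemma cq_nc3 {T} {G : group_on T} {D} a b c x y z :
  cquad G D a b c x y z -> ~ coll G D c z.
Proof. move=> Q; exact: (cq_nc (cq_ab (cq_bc Q))). Qed.

Lemma cq_info {T} {G : group_on T} {D} a b c x y z :
  cquad G D a b c x y z ->
  (fline G D a b c /\ fline G D a y z /\ fline G D b x z /\ fline G D c x y) /\
      (~ coll G D a x /\ ~ coll G D b y /\ ~ coll G D c z).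
Proof.
move=> Q; have := Q; case=> _ [l1 [l2 [l3 l4]]] _ _; do !split => //.
exact: cq_nc Q. exact: cq_nc2 Q. exact: cq_nc3 Q.
Qed.

Lemma cq_dist {T} {G : group_on T} {D} a b c x y z :
  cquad G D a b c x y z ->
  (a <> b /\ a <> c /\ a <> x /\ a <> y /\ a <> z /\ b <> c /\ b <> x /\
       b <> y /\ b <> z /\ c <> x /\ c <> y /\ c <> z /\ x <> y /\ x <> z /\ y <> z).
Proof. by case. Qed.

Lemma cq3 {T} {G : group_on T} {D} a b c x y z w :
  cquad G D a b c x y z -> fline G D a b w -> six a b c x y z w -> w = c.
Proof.
case=> Hd _ _ Hcl Hl Hw.
have Ha : six a b c x y z a by six_in.
have Hb : six a b c x y z b by six_in.
have H := Hcl a b w Ha Hb Hw Hl.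
have [n1 [n2 n3]] := fline_neqs Hl.
clear Ha Hb Hw Hcl.
decompose [and] Hd.
destruct H as [H|[H|[H|H]]]; have [h1 [h2 h3]] := tri_dest H;
  destruct h1 as [h1|[h1|h1]]; destruct h2 as [h2|[h2|h2]];
  destruct h3 as [h3|[h3|h3]]; congruence.
Qed.

Ltac sixt := let t := fresh "t" in intro t; clear; rewrite /six; tauto.

Lemma first_line {T} {G : group_on T} {D} a b c x y z u v w :
  cquad G D a b c x y z -> triple_eq u v w a b c -> fline G D u v w ->
  exists x' y' z', cquad G D u v w x' y' z' /\
    forall t, six a b c x y z t <-> six u v w x' y' z' t.
Proof.
move=> Q H Hl.
have [h1 [h2 h3]] := tri_dest H.
have [n1 [n2 n3]] := fline_neqs Hl.
have Hd := cq_dist Q.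
decompose [and] Hd.
clear H.
destruct h1 as [e1|[e1|e1]]; destruct h2 as [e2|[e2|e2]];
  destruct h3 as [e3|[e3|e3]]; try congruence; subst u v w;
  first [ do 3 eexists; split; [exact Q | sixt]
        | do 3 eexists; split; [exact (cq_bc Q) | sixt]
        | do 3 eexists; split; [exact (cq_ab Q) | sixt]
        | do 3 eexists; split; [exact (cq_bc (cq_ab Q)) | sixt]
        | do 3 eexists; split; [exact (cq_ab (cq_bc Q)) | sixt]
        | do 3 eexists; split; [exact (cq_bc (cq_ab (cq_bc Q))) | sixt] ].
Qed.

Lemma liq {T} {G : group_on T} {D} a b c x y z u v w :
  cquad G D a b c x y z -> fline G D u v w ->
  six a b c x y z u -> six a b c x y z v -> six a b c x y z w ->
  exists x' y' z', cquad G D u v w x' y' z' /\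
    forall t, six a b c x y z t <-> six u v w x' y' z' t.
Proof.
move=> Q Hl Hu Hv Hw.
have := Q; case=> _ _ _ Hcl.
case: (Hcl u v w Hu Hv Hw Hl) => [H|[H|[H|H]]].
- exact: first_line Q H Hl.
- have [x' [y' [z' [Q2 E]]]] := first_line (cq_12 Q) (te_acb H) Hl.
  exists x', y', z'; split => // t; apply: iff_trans _ (E t); clear; rewrite /six; tauto.
- have H' : triple_eq u v w z b x by tri_go H.
  have [x' [y' [z' [Q2 E]]]] := first_line (cq_13 Q) H' Hl.
  exists x', y', z'; split => // t; apply: iff_trans _ (E t); clear; rewrite /six; tauto.
- have [x' [y' [z' [Q2 E]]]] := first_line (cq_14 Q) (te_cba H) Hl.
  exists x', y', z'; split => // t; apply: iff_trans _ (E t); clear; rewrite /six; tauto.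
Qed.

Lemma gen_in {T} {G : group_on T} {D} (A : T -> Prop) t : A t -> Defs.generated G D A t.
Proof. by move=> H S _ HS; apply HS. Qed.

Lemma uniq3 {T} {G : group_on T} {D} (Hs : symplectic G D) u v w w' :
  fline G D u v w -> fline G D u v w' -> w = w'.
Proof.
move=> H1 H2; case: (classic (w = w')) => // Hne; exfalso.
have [n1 [n2 n3]] := fline_neqs H1; have [m1 [m2 m3]] := fline_neqs H2.
have Ht : ~ triple_eq u v w u v w'.
  move=> Ht; have := proj1 (Ht w) (or_intror (or_intror erefl)).
  clear -n2 n3 Hne; intuition congruence.
case: (Hs _ _ _ _ _ H1 H2 Ht) => [a' [b' [c' [x' [y' [z' [Q E]]]]]]].
have g : forall t, (t = u \/ t = v \/ t = w \/ t = v \/ t = w') -> six a' b' c' x' y' z' t.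
  by move=> t Ht'; apply/E; apply: gen_in.
have [x'' [y'' [z'' [Q2 E2]]]] := liq Q H1 (g u ltac:(tauto)) (g v ltac:(tauto)) (g w ltac:(tauto)).
apply Hne; symmetry; apply: (cq3 Q2 H2); apply/E2; apply g; tauto.
Qed.

Lemma plane {T} {G : group_on T} {D} (Hs : symplectic G D) a b c d e :
  fline G D a b c -> fline G D a d e -> b <> d -> b <> e ->
  exists g, cquad G D a b c g d e \/ cquad G D a b c g e d.
Proof.
move=> H1 H2 nbd nbe.
have [n1 [n2 n3]] := fline_neqs H1; have [m1 [m2 m3]] := fline_neqs H2.
have Ht : ~ triple_eq a b c a d e.
  move=> Ht; have := proj1 (Ht b) (or_intror (or_introl erefl)).
  clear -n1 nbd nbe; intuition congruence.
case: (Hs _ _ _ _ _ H1 H2 Ht) => [a' [b' [c' [x' [y' [z' [Q E]]]]]]].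
have g : forall t, (t = a \/ t = b \/ t = c \/ t = d \/ t = e) -> six a' b' c' x' y' z' t.
  by move=> t Ht'; apply/E; apply: gen_in.
have [x [y [z [Q2 E2]]]] := liq Q H1 (g a ltac:(tauto)) (g b ltac:(tauto)) (g c ltac:(tauto)).
have Hd6 : six a b c x y z d by apply/E2; apply g; tauto.
have He6 : six a b c x y z e by apply/E2; apply g; tauto.
have Ha6 : six a b c x y z a by six_in.
have := Q2; case=> Hd _ _ Hcl.
have H := Hcl a d e Ha6 Hd6 He6 H2.
clear Hcl E2 g E Q Hd6 He6 Ha6.
decompose [and] Hd.
destruct H as [H|[H|[H|H]]]; have [h1 [h2 h3]] := tri_dest H;
  destruct h1 as [h1|[h1|h1]]; destruct h2 as [h2|[h2|h2]];
  destruct h3 as [h3|[h3|h3]]; try congruence; subst d e;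
  first [by exists x; left | by exists x; right].
Qed.

Lemma analysis {T} {G : group_on T} {D} (Hs : symplectic G D) a b c x y z p q r :
  cquad G D a b c x y z -> cquad G D a b c p q r ->
  ~ (forall t, six a b c x y z t <-> six a b c p q r t) ->
  exists s, cquad G D c p q s x y \/ cquad G D c p q s y x.
Proof.
move=> Q1 Q2 Hne.
have [[l1 [l2 [l3 l4]]] _] := cq_info Q1.
have [[m1 [m2 [m3 m4]]] _] := cq_info Q2.
have Hd := cq_dist Q1.
apply: (plane Hs m4 l4).
- move=> E; subst p.
  have E1 : q = y by apply: (uniq3 Hs (u:=c) (v:=x)); lperm.
  subst q.
  have E2 : r = z by apply: (uniq3 Hs (u:=b) (v:=x)); lperm.
  subst r; apply: Hne => t; tauto.
- move=> E; subst p.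
  apply: (cq_nc2 Q1); split; first by decompose [and] Hd; congruence.
  by exists r.
Qed.

Lemma tri {T} {G : group_on T} {D} (Hs : symplectic G D) x r e q f a :
  fline G D x r e -> fline G D x q f -> fline G D a q r -> x <> a -> fline G D a e f.
Proof.
move=> l1 l2 l3 nxa.
have [n1 [n2 n3]] := fline_neqs l3.
have rf : r <> f.
  move=> E; subst f; apply: nxa; apply: (uniq3 Hs (u:=q) (v:=r)); lperm.
have rq : r <> q by move=> E; apply: n3; rewrite E.
have [g [K|K]] := plane Hs l1 l2 rq rf.
- exfalso; apply: (cq_nc2 K); eapply line_coll; lperm.
- have [[k1 [k2 [k3 k4]]] _] := cq_info K.
  have E : g = a by apply: (uniq3 Hs (u:=r) (v:=q)); lperm.
  subst g; lperm.
Qed.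

Ltac contra := match goal with N : ~ coll _ _ _ _ |- _ =>
  exfalso; apply: N; eapply line_coll; lperm end.
Ltac ncs := first [assumption | let H := fresh in move=> H; apply coll_sym in H; contradiction].

Theorem proposition5p20 (T : Type) (G : group_on T) (D : T -> Prop)
  (a b c x y z p q r : T) :
  three_transposition_group G D ->
  symplectic G D ->
  cquad G D a b c x y z ->
  cquad G D a b c p q r ->
  ~ (forall t, six a b c x y z t <-> six a b c p q r t) ->
  let caseA :=
    [/\ coll G D p x /\ coll G D q y /\ coll G D r z,
        ~ coll G D p y /\ ~ coll G D p z /\ ~ coll G D q x /\
        ~ coll G D q z /\ ~ coll G D r x /\ ~ coll G D r y &
        exists w, [/\ fline G D p x w, fline G D q y w, fline G D r z w &
                      ~ coll G D w a /\ ~ coll G D w b /\ ~ coll G D w c]] in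
  let caseB :=
    [/\ ~ coll G D p x /\ ~ coll G D q y /\ ~ coll G D r z,
        coll G D p y /\ coll G D p z /\ coll G D q x /\
        coll G D q z /\ coll G D r x /\ coll G D r y &
        exists d e f,
          [/\ fline G D r y d /\ fline G D q z d,
              fline G D r x e /\ fline G D p z e,
              fline G D q x f /\ fline G D p y f,
              fline G D a e f /\ fline G D b d f /\ fline G D c d e &
              cquad G D a b c d e f]] in
  (caseA /\ ~ caseB) \/ (caseB /\ ~ caseA).
Proof.
move=> _ Hs Q1 Q2 Hne; cbv zeta.
have [s Hc] := analysis Hs Q1 Q2 Hne.
have Hne_b : ~ (forall t, six a c b x z y t <-> six a c b p r q t).
  move=> H; apply: Hne => t; apply: iff_trans (iff_trans _ (H t)) _; clear; rewrite /six; tauto.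
have [t Hb] := analysis Hs (cq_bc Q1) (cq_bc Q2) Hne_b.
have Hne_a : ~ (forall t, six c b a z y x t <-> six c b a r q p t).
  move=> H; apply: Hne => t'; apply: iff_trans (iff_trans _ (H t')) _; clear; rewrite /six; tauto.
have [u Ha] := analysis Hs (cq_cba Q1) (cq_cba Q2) Hne_a.
have Hd := cq_dist Q1.
have [[l1 [l2 [l3 l4]]] [o1 [o2 o3]]] := cq_info Q1.
have [[m1 [m2 [m3 m4]]] [o4 [o5 o6]]] := cq_info Q2.
destruct Hc as [Kc|Kc]; have [[c1 [c2 [c3 c4]]] [c5 [c6 c7]]] := cq_info Kc;
destruct Hb as [Kb|Kb]; have [[b1 [b2 [b3 b4]]] [b5 [b6 b7]]] := cq_info Kb;
destruct Ha as [Ka|Ka]; have [[a1 [a2 [a3 a4]]] [a5 [a6 a7]]] := cq_info Ka;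
try contra.
-
  right.
  have Ee : fline G D a t s by apply: (tri Hs (x:=x) (r:=r) (q:=q)); [lperm | lperm | lperm | decompose [and] Hd; congruence].
  have Eb : fline G D b u s by apply: (tri Hs (x:=y) (r:=r) (q:=p)); [lperm | lperm | lperm | decompose [and] Hd; congruence].
  have Ec : fline G D c u t by apply: (tri Hs (x:=z) (r:=q) (q:=p)); [lperm | lperm | lperm | decompose [and] Hd; congruence].
  have Q3 : cquad G D a b c u t s.
    have nbt : b <> t by have := cq_dist Kb; clear; intuition.
    have nbs : b <> s.
      move=> E; subst s.
      have E : q = z by apply: (uniq3 Hs (u:=b) (v:=x)); lperm.
      subst q; have := cq_dist Ka; clear; intuition.
    have [g [K|K]] := plane Hs l1 Ee nbt nbs.
    + have [[k1 [k2 [k3 k4]]] _] := cq_info K.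
      have E : g = u by apply: (uniq3 Hs (u:=b) (v:=s)); lperm.
      by subst g.
    + exfalso; apply: (cq_nc2 K); eapply line_coll; lperm.
  split.
  + split.
    * split; [ncs | split; ncs].
    * do 5 (split; [eapply line_coll; lperm|]); eapply line_coll; lperm.
    * exists u, t, s; split; [split; lperm | split; lperm | split; lperm | split; [|split]; lperm | exact Q3].
  + case=> [[N _] _ _]; apply: c6 N.
-
  left.
  have E1 : t = s by apply: (uniq3 Hs (u:=p) (v:=x)); lperm.
  have E2 : u = s by apply: (uniq3 Hs (u:=q) (v:=y)); lperm.
  subst t u.
  split.
  + split.
    * split; [eapply line_coll; lperm | split; eapply line_coll; lperm].
    * do 5 (split; [ncs|]); ncs.
    * exists s; split; [lperm | lperm | lperm | split; [ncs | split; ncs]].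
  + case=> [[N _] _ _]; apply: N; eapply line_coll; lperm.
Qed.
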